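(* Let $\Delta>1$ be a constant such that every $\Delta$-extensible map $g\colon W\to V$ satisfies $\sup_{x,y\in W}\frac{Dg(x)}{Dg(y)}\le2$. Let $W,V$ be open intervals and $g\colon W\to V$ a $C^2$ surjective diffeomorphism with $|Dg|^{-1/2}$ convex, which extends to a $C^2$ surjective diffeomorphism $g\colon\hat W\to\hat V$ with $|Dg|^{-1/2}$ convex, where $\hat W,\hat V$ are intervals and $\hat W$ compactly contains $W$. Suppose that each connected component of $\hat V\setminus V$ has length at least $10(1+\Delta)|V|$ and that $|V|>|\hat W|$. Then $|Dg|>5$ on $W$.
   Context: For $\delta>0$, a $C^2$ surjective diffeomorphism $g\colon W\to V$ between open intervals with $|Dg|^{-1/2}$ convex is called $\delta$-extensible if it extends to a $C^2$ surjective diffeomorphism $g\colon\hat W\to\hat V$ with $|Dg|^{-1/2}$ convex, where $\hat W,\hat V$ are intervals, $\hat W$ compactly contains $W$, and both connected components of $\hat V\setminus V$ have length at least $\delta|V|$. $|\cdot|$ denotes length. *)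

(* Defs.v *)
From Stdlib Require Import Reals.
From Coquelicot Require Import Coquelicot.
Open Scope R_scope.

Definition open_int (a b : R) : R -> Prop := fun x => a < x /\ x < b.

Definition is_interval (I : R -> Prop) : Prop :=
  forall x y z, I x -> I z -> x <= y -> y <= z -> I y.

Definition ilen (I : R -> Prop) : Rbar := Rbar_minus (Lub_Rbar I) (Glb_Rbar I).

(* f' is the derivative of f within I at every point of I (one-sided at endpoints of I). *)
Definition deriv_within (I : R -> Prop) (f f' : R -> R) : Prop :=
  forall x, I x -> forall eps, 0 < eps -> exists delta, 0 < delta /\
    forall y, I y -> y <> x -> Rabs (y - x) < delta ->
      Rabs ((f y - f x) / (y - x) - f' x) < eps.

Definition cont_within (I : R -> Prop) (f : R -> R) : Prop :=
  forall x, I x -> forall eps, 0 < eps -> exists delta, 0 < delta /\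
    forall y, I y -> Rabs (y - x) < delta -> Rabs (f y - f x) < eps.

Definition C2_with (I : R -> Prop) (f Df : R -> R) : Prop :=
  deriv_within I f Df /\ exists D2f, deriv_within I Df D2f /\ cont_within I D2f.

Definition C2_diffeo (I J : R -> Prop) (f Df : R -> R) : Prop :=
  C2_with I f Df /\
  exists h Dh, C2_with J h Dh /\
    (forall x, I x -> J (f x) /\ h (f x) = x) /\
    (forall y, J y -> I (h y) /\ f (h y) = y).

Definition convex_on (I : R -> Prop) (phi : R -> R) : Prop :=
  forall x y t, I x -> I y -> 0 <= t -> t <= 1 ->
    phi (t * x + (1 - t) * y) <= t * phi x + (1 - t) * phi y.

Definition inv_sqrt_abs (Df : R -> R) : R -> R := fun x => / sqrt (Rabs (Df x)).

(* What compactly contains the open interval (a,b): its closure [a,b] lies in What. *)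
Definition compactly_contains_int (What : R -> Prop) (a b : R) : Prop :=
  forall x, a <= x -> x <= b -> What x.

(* Connected components of Vhat \ (c,d) (V = (c,d) is contained in Vhat). *)
Definition left_comp (Vhat : R -> Prop) (c : R) : R -> Prop := fun y => Vhat y /\ y <= c.
Definition right_comp (Vhat : R -> Prop) (d : R) : R -> Prop := fun y => Vhat y /\ d <= y.

Definition extensible (delta : R) (a b c d : R) (g Dg : R -> R) : Prop :=
  C2_diffeo (open_int a b) (open_int c d) g Dg /\
  convex_on (open_int a b) (inv_sqrt_abs Dg) /\
  exists What Vhat : R -> Prop,
    is_interval What /\ is_interval Vhat /\
    compactly_contains_int What a b /\
    C2_diffeo What Vhat g Dg /\
    convex_on What (inv_sqrt_abs Dg) /\
    Rbar_le (delta * (d - c)) (ilen (left_comp Vhat c)) /\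
    Rbar_le (delta * (d - c)) (ilen (right_comp Vhat d)).

(* Main.v *)
Require Import Defs.
From Stdlib Require Import Reals Lra.
From Coquelicot Require Import Coquelicot.
Open Scope R_scope.

Lemma ilen_ge (S : R -> Prop) x y : S x -> S y -> Rbar_le (y - x) (ilen S).
Proof.
  intros Hx Hy. unfold ilen.
  destruct (Lub_Rbar_correct S) as [Hu _]. destruct (Glb_Rbar_correct S) as [Hl _].
  specialize (Hu y Hy). specialize (Hl x Hx).
  destruct (Lub_Rbar S) as [l| |]; destruct (Glb_Rbar S) as [g| |]; simpl in *; try tauto; lra.
Qed.

Lemma ilen_left (S : R -> Prop) (r m : R) : Rbar_le r (ilen S) -> (forall z, S z -> z <= m) ->
  forall e, 0 < e -> exists z, S z /\ z < m - r + e.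
Proof.
  intros Hr Hm e He. destruct (Classical_Prop.classic (exists z, S z /\ z < m - r + e)) as [H|H]; auto.
  exfalso. unfold ilen in Hr.
  destruct (Lub_Rbar_correct S) as [_ Hu]. destruct (Glb_Rbar_correct S) as [_ Hl].
  assert (H1 : Rbar_le (Lub_Rbar S) m). { apply Hu. intros z Hz. simpl. auto. }
  assert (H2 : Rbar_le (m - r + e) (Glb_Rbar S)).
  { apply Hl. intros z Hz. simpl. destruct (Rle_dec (m - r + e) z); auto.
    exfalso; apply H; exists z; split; auto; lra. }
  destruct (Lub_Rbar S) as [l| |]; destruct (Glb_Rbar S) as [g| |]; simpl in *; try tauto; lra.
Qed.

Lemma ilen_right (S : R -> Prop) (r m : R) : Rbar_le r (ilen S) -> (forall z, S z -> m <= z) ->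
  forall e, 0 < e -> exists z, S z /\ m + r - e < z.
Proof.
  intros Hr Hm e He. destruct (Classical_Prop.classic (exists z, S z /\ m + r - e < z)) as [H|H]; auto.
  exfalso. unfold ilen in Hr.
  destruct (Lub_Rbar_correct S) as [_ Hu]. destruct (Glb_Rbar_correct S) as [_ Hl].
  assert (H1 : Rbar_le m (Glb_Rbar S)). { apply Hl. intros z Hz. simpl. auto. }
  assert (H2 : Rbar_le (Lub_Rbar S) (m + r - e)).
  { apply Hu. intros z Hz. simpl. destruct (Rle_dec z (m + r - e)); auto.
    exfalso; apply H; exists z; split; auto; lra. }
  destruct (Lub_Rbar S) as [l| |]; destruct (Glb_Rbar S) as [g| |]; simpl in *; try tauto; lra.
Qed.

Lemma deriv_sub (I I' : R -> Prop) f f' : (forall x, I' x -> I x) -> deriv_within I f f' -> deriv_within I' f f'.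
Proof.
  intros HI H x Hx eps He. destruct (H x (HI x Hx) eps He) as [d [Hd Hd']].
  exists d; split; auto.
Qed.

Lemma cont_sub (I I' : R -> Prop) f : (forall x, I' x -> I x) -> cont_within I f -> cont_within I' f.
Proof.
  intros HI H x Hx eps He. destruct (H x (HI x Hx) eps He) as [d [Hd Hd']].
  exists d; split; auto.
Qed.

Lemma C2_sub (I I' : R -> Prop) f f' : (forall x, I' x -> I x) -> C2_with I f f' -> C2_with I' f f'.
Proof.
  intros HI [H1 [D2 [H2 H3]]]. split. eapply deriv_sub; eauto.
  exists D2; split. eapply deriv_sub; eauto. eapply cont_sub; eauto.
Qed.

Lemma deriv_cont (I : R -> Prop) f f' : deriv_within I f f' -> cont_within I f.
Proof.
  intros H x Hx eps He. destruct (H x Hx 1 Rlt_0_1) as [d [Hd Hd']].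
  set (K := Rabs (f' x) + 1).
  assert (HK : 0 < K) by (unfold K; pose proof (Rabs_pos (f' x)); lra).
  exists (Rmin d (eps / K)); split.
  { apply Rmin_pos; auto. apply Rdiv_lt_0_compat; auto. }
  intros y Hy Hyx.
  destruct (Req_dec y x) as [->|Hne]. { rewrite Rminus_diag, Rabs_R0; auto. }
  specialize (Hd' y Hy Hne (Rlt_le_trans _ _ _ Hyx (Rmin_l _ _))).
  assert (Hq : Rabs ((f y - f x) / (y - x)) <= K).
  { unfold K. pose proof (Rabs_triang_inv ((f y - f x) / (y - x)) (f' x)). lra. }
  assert (Hyx0 : y - x <> 0) by lra.
  replace (f y - f x) with ((f y - f x) / (y - x) * (y - x)) by (field; auto).
  rewrite Rabs_mult.
  assert (Hb : Rabs (y - x) < eps / K) by (eapply Rlt_le_trans; [apply Hyx | apply Rmin_r]).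
  apply Rle_lt_trans with (K * Rabs (y - x)).
  { apply Rmult_le_compat_r; auto. apply Rabs_pos. }
  apply Rlt_le_trans with (K * (eps / K)). apply Rmult_lt_compat_l; auto.
  right; field; lra.
Qed.

Definition clamp (a b x : R) := Rmax a (Rmin b x).

Lemma clamp_in a b x : a <= b -> a <= clamp a b x <= b.
Proof. intros. unfold clamp, Rmax, Rmin. repeat destruct Rle_dec; lra. Qed.

Lemma clamp_lip a b x y : a <= b -> Rabs (clamp a b y - clamp a b x) <= Rabs (y - x).
Proof. intros. unfold clamp, Rmax, Rmin. repeat destruct Rle_dec; unfold Rabs; repeat destruct Rcase_abs; lra. Qed.

Lemma clamp_id a b x : a <= x <= b -> clamp a b x = x.
Proof. intros. unfold clamp, Rmax, Rmin. repeat destruct Rle_dec; lra. Qed.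

Lemma ivt_within (J : R -> Prop) f a b y : a <= b -> (forall x, a <= x <= b -> J x) -> cont_within J f ->
  Rmin (f a) (f b) <= y <= Rmax (f a) (f b) -> exists z, a <= z <= b /\ f z = y.
Proof.
  intros Hab HJ Hc Hy.
  set (F := fun x => f (clamp a b x)).
  assert (HF : continuity F).
  { intros x. unfold continuity_pt, continue_in, limit1_in, limit_in. simpl. unfold R_dist.
    intros eps He. destruct (Hc (clamp a b x) (HJ _ (clamp_in a b x Hab)) eps He) as [d [Hd Hd']].
    exists d; split; auto. intros y0 [_ Hyx]. unfold F. apply Hd'.
    apply HJ, clamp_in; auto. eapply Rle_lt_trans; [apply clamp_lip; auto| auto]. }
  assert (Fa : F a = f a) by (unfold F; rewrite clamp_id; lra).
  assert (Fb : F b = f b) by (unfold F; rewrite clamp_id; lra).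
  rewrite <- Fa, <- Fb in Hy.
  destruct (IVT_gen F a b y HF Hy) as [z [Hz Hfz]].
  rewrite Rmin_left in Hz by auto. rewrite Rmax_right in Hz by auto.
  exists z; split; auto. unfold F in Hfz. rewrite clamp_id in Hfz; auto.
Qed.

Lemma betw (J : R -> Prop) f : is_interval J -> cont_within J f ->
  (forall u v, J u -> J v -> f u = f v -> u = v) ->
  forall u v x, J u -> J v -> u < x < v -> (f u < f x < f v) \/ (f v < f x < f u).
Proof.
  intros HJ Hc Hinj u v x Hu Hv Hx.
  assert (Hin : forall t, u <= t <= v -> J t) by (intros t Ht; apply (HJ u t v); tauto).
  assert (Jx : J x) by (apply Hin; lra).
  assert (N1 : f x <> f u) by (intro E; apply Hinj in E; auto; lra).
  assert (N2 : f x <> f v) by (intro E; apply Hinj in E; auto; lra).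
  assert (N3 : f u <> f v) by (intro E; apply Hinj in E; auto; lra).
  destruct (Rlt_dec (f u) (f v)) as [Huv|Huv].
  - left. split.
    + destruct (Rlt_dec (f u) (f x)); auto. exfalso.
      destruct (ivt_within J f x v (f u)) as [z [Hz Hfz]]; try lra; auto.
      { intros t Ht; apply Hin; lra. }
      { unfold Rmin, Rmax; repeat destruct Rle_dec; lra. }
      apply Hinj in Hfz; auto; [lra| apply Hin; lra].
    + destruct (Rlt_dec (f x) (f v)); auto. exfalso.
      destruct (ivt_within J f u x (f v)) as [z [Hz Hfz]]; try lra; auto.
      { intros t Ht; apply Hin; lra. }
      { unfold Rmin, Rmax; repeat destruct Rle_dec; lra. }
      apply Hinj in Hfz; auto; [lra| apply Hin; lra].
  - right. split.
    + destruct (Rlt_dec (f v) (f x)); auto. exfalso.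
      destruct (ivt_within J f u x (f v)) as [z [Hz Hfz]]; try lra; auto.
      { intros t Ht; apply Hin; lra. }
      { unfold Rmin, Rmax; repeat destruct Rle_dec; lra. }
      apply Hinj in Hfz; auto; [lra| apply Hin; lra].
    + destruct (Rlt_dec (f x) (f u)); auto. exfalso.
      destruct (ivt_within J f x v (f u)) as [z [Hz Hfz]]; try lra; auto.
      { intros t Ht; apply Hin; lra. }
      { unfold Rmin, Rmax; repeat destruct Rle_dec; lra. }
      apply Hinj in Hfz; auto; [lra| apply Hin; lra].
Qed.

Lemma deriv_nz (I J : R -> Prop) f Df h Dh : deriv_within I f Df -> deriv_within J h Dh ->
  (forall x, I x -> J (f x) /\ h (f x) = x) ->
  forall x al be, al < x < be -> (forall t, al < t < be -> I t) -> Df x <> 0.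
Proof.
  intros Hf Hh Hinv x al be Hx Hab E.
  assert (Ix : I x) by (apply Hab; lra).
  destruct (Hinv x Ix) as [Jy0 hy0].
  set (y0 := f x) in *.
  destruct (Hh y0 Jy0 1 Rlt_0_1) as [d1 [Hd1 Hd1']].
  set (K := Rabs (Dh y0) + 1).
  assert (HK : 1 <= K) by (unfold K; pose proof (Rabs_pos (Dh y0)); lra).
  assert (He2 : 0 < / (2 * K)) by (apply Rinv_0_lt_compat; lra).
  destruct (Hf x Ix _ He2) as [d2 [Hd2 Hd2']].
  set (t := Rmin d1 (Rmin d2 (be - x)) / 2).
  assert (Ht0 : 0 < t).
  { unfold t. apply Rdiv_lt_0_compat; [|lra]. repeat apply Rmin_pos; lra. }
  assert (Ht1 : t < d1) by (unfold t; pose proof (Rmin_l d1 (Rmin d2 (be - x))); lra).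
  assert (Ht2 : t < d2) by (unfold t; pose proof (Rmin_r d1 (Rmin d2 (be - x))); pose proof (Rmin_l d2 (be - x)); lra).
  assert (Ht3 : t < be - x) by (unfold t; pose proof (Rmin_r d1 (Rmin d2 (be - x))); pose proof (Rmin_r d2 (be - x)); lra).
  set (y := x + t).
  assert (Iy : I y) by (apply Hab; unfold y; lra).
  assert (Hyx : y - x = t) by (unfold y; ring).
  specialize (Hd2' y Iy ltac:(unfold y; lra) ltac:(rewrite Hyx, Rabs_pos_eq; lra)).
  rewrite E, Rminus_0_r, Hyx in Hd2'.
  set (q := (f y - f x) / t) in *.
  assert (Hfq : f y - f x = q * t) by (unfold q; field; lra).
  destruct (Hinv y Iy) as [Jz hz].
  assert (Hz0 : f y - y0 <> 0).
  { intro E2. assert (f y = y0) by lra. rewrite H in hz. lra. }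
  assert (Hq : Rabs (f y - y0) = Rabs q * t) by (unfold y0; rewrite Hfq, Rabs_mult, (Rabs_pos_eq t); lra).
  assert (Hqb : Rabs q * (2 * K) < 1).
  { apply Rmult_lt_reg_r with (/ (2*K)); auto. rewrite Rmult_assoc, Rinv_r, Rmult_1_r, Rmult_1_l; lra. }
  specialize (Hd1' (f y) Jz ltac:(lra) ltac:(rewrite Hq; pose proof (Rabs_pos q); nra)).
  rewrite hz, hy0, Hyx in Hd1'.
  assert (Hk : Rabs (t / (f y - y0)) < K).
  { unfold K. pose proof (Rabs_triang_inv (t / (f y - y0)) (Dh y0)). lra. }
  rewrite Rabs_div, (Rabs_pos_eq t), Hq in Hk by lra.
  assert (Hp : 0 < Rabs q * t) by (rewrite <- Hq; apply Rabs_pos_lt; auto).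
  apply Rmult_lt_compat_r with (r := Rabs q * t) in Hk; auto.
  unfold Rdiv in Hk. rewrite Rmult_assoc, Rinv_l, Rmult_1_r in Hk by lra.
  nra.
Qed.

Lemma deriv_lim (I : R -> Prop) f Df x al be : deriv_within I f Df -> al < x < be ->
  (forall t, al < t < be -> I t) -> derivable_pt_lim f x (Df x).
Proof.
  intros Hf Hx Hab eps He.
  destruct (Hf x (Hab x Hx) eps He) as [d [Hd Hd']].
  assert (Hpos : 0 < Rmin d (Rmin (x - al) (be - x))) by (repeat apply Rmin_pos; lra).
  exists (mkposreal _ Hpos). intros hh Hh0 Hhl. simpl in Hhl.
  pose proof (Rmin_l d (Rmin (x - al) (be - x))). pose proof (Rmin_r d (Rmin (x - al) (be - x))).
  pose proof (Rmin_l (x - al) (be - x)). pose proof (Rmin_r (x - al) (be - x)).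
  assert (Hab' : Rabs hh < x - al /\ Rabs hh < be - x) by lra.
  assert (I (x + hh)).
  { apply Hab. revert Hab'; unfold Rabs; destruct Rcase_abs; lra. }
  specialize (Hd' (x + hh) H3 ltac:(lra) ltac:(replace (x + hh - x) with hh by ring; lra)).
  replace (x + hh - x) with hh in Hd' by ring. auto.
Qed.

Lemma deriv_sign (I : R -> Prop) f Df x rho s : deriv_within I f Df -> 0 < rho -> I x ->
  (forall y, x < y < x + rho -> I y /\ 0 < (f y - f x) * s) -> 0 <= Df x * s.
Proof.
  intros Hf Hr Ix Hy.
  destruct (Rle_dec 0 (Df x * s)) as [|Hn]; auto. exfalso.
  assert (HD : Df x <> 0) by (intro E; rewrite E in Hn; lra).
  destruct (Hf x Ix (Rabs (Df x)) (Rabs_pos_lt _ HD)) as [d [Hd Hd']].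
  set (t := Rmin d rho / 2).
  assert (Ht0 : 0 < t) by (unfold t; apply Rdiv_lt_0_compat; [apply Rmin_pos|]; lra).
  assert (Ht1 : t < d) by (unfold t; pose proof (Rmin_l d rho); lra).
  assert (Ht2 : t < rho) by (unfold t; pose proof (Rmin_r d rho); lra).
  destruct (Hy (x + t) ltac:(lra)) as [Iy Hpos].
  specialize (Hd' (x + t) Iy ltac:(lra) ltac:(replace (x + t - x) with t by ring; rewrite Rabs_pos_eq; lra)).
  replace (x + t - x) with t in Hd' by ring.
  set (q := (f (x + t) - f x) / t) in *.
  assert (Hfq : f (x + t) - f x = q * t) by (unfold q; field; lra).
  rewrite Hfq in Hpos.
  assert (Hqs : 0 < q * s) by nra.
  assert (HqD : 0 < q * Df x).
  { revert Hd'. unfold Rabs; repeat destruct Rcase_abs; intros; nra. }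
  nra.
Qed.

Lemma core (W : R -> Prop) g Dg p q : is_interval W -> deriv_within W g Dg ->
  (forall u v, W u -> W v -> g u = g v -> u = v) -> p < q -> W p -> W q ->
  forall x, p < x < q -> ((g p < g x < g q) \/ (g q < g x < g p)) /\ 0 <= Dg x * (g q - g p).
Proof.
  intros HW HD Hinj Hpq Wp Wq x Hx.
  assert (Hc : cont_within W g) by (eapply deriv_cont; eauto).
  assert (Hin : forall t, p <= t <= q -> W t) by (intros t Ht; apply (HW p t q); tauto).
  assert (H1 := betw W g HW Hc Hinj p q x Wp Wq Hx).
  split; auto.
  apply (deriv_sign W g Dg x (q - x)); auto; try lra. apply Hin; lra.
  intros y Hy. split. apply Hin; lra.
  assert (H2 := betw W g HW Hc Hinj x q y (Hin x ltac:(lra)) Wq ltac:(lra)).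
  destruct H1; destruct H2; nra.
Qed.

Theorem mainTheorem4 (Delta : R) (HDelta : 1 < Delta)
  (Hbound : forall (a' b' c' d' : R) (g' Dg' : R -> R),
      a' < b' -> c' < d' -> extensible Delta a' b' c' d' g' Dg' ->
      forall x y, open_int a' b' x -> open_int a' b' y -> Dg' x / Dg' y <= 2)
  (a b c d : R) (g Dg : R -> R) (What Vhat : R -> Prop)
  (Hab : a < b) (Hcd : c < d)
  (Hg : C2_diffeo (open_int a b) (open_int c d) g Dg)
  (Hconv : convex_on (open_int a b) (inv_sqrt_abs Dg))
  (HWi : is_interval What) (HVi : is_interval Vhat)
  (Hcpt : compactly_contains_int What a b)
  (Hgext : C2_diffeo What Vhat g Dg)
  (Hconvext : convex_on What (inv_sqrt_abs Dg))
  (Hleft : Rbar_le (10 * (1 + Delta) * (d - c)) (ilen (left_comp Vhat c)))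
  (Hright : Rbar_le (10 * (1 + Delta) * (d - c)) (ilen (right_comp Vhat d)))
  (Hlen : Rbar_lt (ilen What) (d - c)) :
  forall x, open_int a b x -> 5 < Rabs (Dg x).
Proof.
  intros x0 Hx0.
  pose proof Hgext as Hgext'.
  destruct Hgext as [[HgD HgR] [h [Dh [HhC2 [Hgh Hhg]]]]].
  destruct Hg as [_ [h0 [Dh0 [_ [Hg1 _]]]]].
  assert (HhD := proj1 HhC2).
  assert (Hgc : cont_within What g) by (eapply deriv_cont; eauto).
  assert (Hhc : cont_within Vhat h) by (eapply deriv_cont; eauto).
  assert (ginj : forall u v, What u -> What v -> g u = g v -> u = v).
  { intros u v Hu Hv E. rewrite <- (proj2 (Hgh u Hu)), <- (proj2 (Hgh v Hv)), E; auto. }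
  assert (hinj : forall u v, Vhat u -> Vhat v -> h u = h v -> u = v).
  { intros u v Hu Hv E. rewrite <- (proj2 (Hhg u Hu)), <- (proj2 (Hhg v Hv)), E; auto. }
  set (w := d - c).
  assert (Hw : 0 < w) by (unfold w; lra).
  set (r := 10 * (1 + Delta) * (d - c)) in *.
  assert (Hr : 10 * (1 + Delta) * w = r) by reflexivity.
  destruct (ilen_left (left_comp Vhat c) r c Hleft ltac:(intros z [_ Hz]; auto) w Hw) as [z1 [[Vz1 Hz1c] Hz1]].
  destruct (ilen_right (right_comp Vhat d) r d Hright ltac:(intros z [_ Hz]; auto) w Hw) as [z2 [[Vz2 Hz2d] Hz2]].
  assert (VIn : forall y, z1 <= y <= z2 -> Vhat y) by (intros y Hy; apply (HVi z1 y z2); tauto).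
  assert (Hr20 : 20 * w < r) by nra.
  set (c' := c - 9/2 * w). set (d' := d + 9/2 * w).
  set (cm := c - 5 * w). set (dp := d + 5 * w).
  assert (Vc' : Vhat c') by (apply VIn; unfold c', w in *; lra).
  assert (Vd' : Vhat d') by (apply VIn; unfold d', w in *; lra).
  assert (Vcm : Vhat cm) by (apply VIn; unfold cm, w in *; lra).
  assert (Vdp : Vhat dp) by (apply VIn; unfold dp, w in *; lra).
  set (p := h c'). set (q := h d'). set (P := h cm). set (Q := h dp).
  destruct (Hhg c' Vc') as [Wp gp]. destruct (Hhg d' Vd') as [Wq gq].
  destruct (Hhg cm Vcm) as [WP gP]. destruct (Hhg dp Vdp) as [WQ gQ].
  fold p in Wp, gp. fold q in Wq, gq. fold P in WP, gP. fold Q in WQ, gQ.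
  assert (Hp := betw Vhat h HVi Hhc hinj cm dp c' Vcm Vdp ltac:(unfold cm, dp, c', w in *; lra)).
  assert (Hq := betw Vhat h HVi Hhc hinj cm dp d' Vcm Vdp ltac:(unfold cm, dp, d', w in *; lra)).
  fold p q P Q in Hp, Hq.
  assert (Hpq : p <> q).
  { intro E. apply hinj in E; auto. unfold c', d', w in *; lra. }
  set (p' := Rmin p q). set (q' := Rmax p q).
  set (P' := Rmin P Q). set (Q' := Rmax P Q).
  assert (Hord : P' < p' /\ p' < q' /\ q' < Q').
  { unfold p', q', P', Q', Rmin, Rmax. repeat destruct Rle_dec; lra. }
  assert (WIn : forall t, P' <= t <= Q' -> What t).
  { intros t Ht. unfold P', Q', Rmin, Rmax in Ht. destruct Rle_dec.
    - apply (HWi P t Q); tauto.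
    - apply (HWi Q t P); auto; lra. }
  assert (Wp' : What p') by (apply WIn; lra).
  assert (Wq' : What q') by (apply WIn; lra).
  assert (Hends : (g p' = c' /\ g q' = d' /\ p < q) \/ (g p' = d' /\ g q' = c' /\ q < p)).
  { unfold p', q', Rmin, Rmax. destruct Rle_dec.
    - left. repeat split; auto. lra.
    - right. repeat split; auto. lra. }
  assert (Hcd' : c' < d') by (unfold c', d', w in *; lra).
  assert (Hcore := core What g Dg p' q' HWi HgD ginj (proj1 (proj2 Hord)) Wp' Wq').
  assert (Hmap1 : forall x, p' < x < q' -> c' < g x < d').
  { intros x Hx. destruct (Hcore x Hx) as [H1 _]. destruct Hends as [[E1 [E2 _]]|[E1 [E2 _]]];
    rewrite E1, E2 in H1; lra. }
  assert (Hmap2 : forall y, c' < y < d' -> p' < h y < q').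
  { intros y Hy. assert (Hb := betw Vhat h HVi Hhc hinj c' d' y Vc' Vd' Hy). fold p q in Hb.
    unfold p', q', Rmin, Rmax. repeat destruct Rle_dec; lra. }
  assert (Hsign : forall x, p' < x < q' -> 0 < Dg x * (q - p)).
  { intros x Hx. destruct (Hcore x Hx) as [_ H2].
    assert (Hnz : Dg x <> 0) by (apply (deriv_nz What Vhat g Dg h Dh HgD HhD Hgh x p' q'); auto;
      intros t Ht; apply WIn; lra).
    destruct Hends as [[E1 [E2 E3]]|[E1 [E2 E3]]]; rewrite E1, E2 in H2.
    - assert (0 <= Dg x) by nra. nra.
    - assert (Dg x <= 0) by nra. nra. }
  destruct (MVT_cor2 g Dg p' q' (proj1 (proj2 Hord))) as [xi [Hxi1 Hxi2]].
  { intros t Ht. apply (deriv_lim What g Dg t P' Q' HgD); [lra|]. intros u Hu; apply WIn; lra. }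
  assert (Hxi : Dg xi * (q - p) = 10 * w).
  { destruct Hends as [[E1 [E2 E3]]|[E1 [E2 E3]]]; rewrite E1, E2 in Hxi1;
    unfold p', q' in Hxi1.
    - rewrite Rmin_left, Rmax_right in Hxi1 by lra. unfold c', d', w in *. lra.
    - rewrite Rmin_right, Rmax_left in Hxi1 by lra. unfold c', d', w in *. lra. }
  assert (Hlenpq : Rabs (q - p) < w).
  { assert (L1 := ilen_ge What p q Wp Wq). assert (L2 := ilen_ge What q p Wq Wp).
    assert (M1 := Rbar_le_lt_trans _ _ _ L1 Hlen). assert (M2 := Rbar_le_lt_trans _ _ _ L2 Hlen).
    simpl in M1, M2. unfold Rabs; destruct Rcase_abs; unfold w; lra. }
  assert (Hext : extensible Delta p' q' c' d' g Dg).
  { split; [|split].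
    - split. { apply (C2_sub What); [|split; auto]. intros t Ht; destruct Ht; apply WIn; lra. }
      exists h, Dh. split. { apply (C2_sub Vhat); auto. intros t [Ht1 Ht2]; apply VIn; unfold c', d', w in *; lra. }
      split.
      + intros x Hx. split. apply Hmap1; destruct Hx; auto. apply Hgh. destruct Hx; apply WIn; lra.
      + intros y Hy. split. apply Hmap2; destruct Hy; auto. apply Hhg. destruct Hy; apply VIn; unfold c', d', w in *; lra.
    - intros x y t Hx Hy Ht0 Ht1. apply Hconvext; auto; [destruct Hx | destruct Hy]; apply WIn; lra.
    - exists What, Vhat. refine (conj HWi (conj HVi (conj _ (conj Hgext' (conj Hconvext (conj _ _)))))).
      + intros t Ht1 Ht2. apply WIn; lra.
      + apply Rbar_le_trans with (c' - z1).
        * simpl. unfold c', d', w in *. nra.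
        * apply ilen_ge; split; auto. unfold c', w in *; lra. lra.
      + apply Rbar_le_trans with (z2 - d').
        * simpl. unfold c', d', w in *. nra.
        * apply ilen_ge; split; auto. lra. unfold d', w in *; lra. }
  destruct (Hg1 x0 Hx0) as [[Hgx1 Hgx2] _].
  assert (Wx0 : What x0) by (apply Hcpt; destruct Hx0; lra).
  assert (Hx0' : p' < x0 < q').
  { rewrite <- (proj2 (Hgh x0 Wx0)). apply Hmap2. unfold c', d', w in *; lra. }
  assert (HB := Hbound p' q' c' d' g Dg (proj1 (proj2 Hord)) Hcd' Hext xi x0 Hxi2 Hx0').
  assert (Hs := Hsign x0 Hx0').
  assert (Hqp : q - p <> 0) by lra.
  assert (Hnz : Dg x0 <> 0) by (intro E; rewrite E in Hs; lra).
  replace (Dg xi / Dg x0) with ((Dg xi * (q - p)) / (Dg x0 * (q - p))) in HB by (field; auto).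
  rewrite Hxi in HB.
  assert (H10 : 10 * w <= 2 * (Dg x0 * (q - p))).
  { apply Rmult_le_compat_r with (r := Dg x0 * (q - p)) in HB; [|lra].
    unfold Rdiv in HB. rewrite Rmult_assoc, Rinv_l, Rmult_1_r in HB by lra. lra. }
  assert (Habs : Rabs (Dg x0) * Rabs (q - p) = Dg x0 * (q - p)).
  { rewrite <- Rabs_mult. apply Rabs_pos_eq; lra. }
  assert (Hpos : 0 < Rabs (q - p)) by (apply Rabs_pos_lt; auto).
  nra.
Qed.
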